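(* Let $q\neq-1$ be real and let $n,m\ge0$ be integers. Then $$\sum_{k=0}^{n}(-1)^kq^{\binom{k}{2}}\begin{bmatrix} n\\ k\end{bmatrix}\prod_{j=n+m+1-k}^{n+m}(1+q^j)\;U_{2n+m-1-k}(1,s,q)=q^{n^2-n+mn}s^n\,U_{m-1}(1,s,q).$$
   Context: $U_{-1}=0$, $U_0=1$, $U_n(x,s,q)=(1+q^{n})x\,U_{n-1}(x,s,q)+q^{n-1}s\,U_{n-2}(x,s,q)$ for $n\ge1$; $U_n(1,s,q)$ is its value at $x=1$. Notation: $[m]=1+q+\cdots+q^{m-1}$, $[m]!=[1]\cdots[m]$, $\begin{bmatrix} m\\ j\end{bmatrix}=\frac{[m]!}{[j]![m-j]!}$; empty products equal $1$. *)

(* Defs.v *)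
From mathcomp Require Import all_boot all_order all_algebra.
Set Implicit Arguments. Unset Strict Implicit. Unset Printing Implicit Defensive.
Import Order.TTheory GRing.Theory Num.Theory.
Local Open Scope ring_scope.

(* Shifted polynomials: Ush x s q k = U_{k-1}(x,s,q), so that the index -1 is
   representable with k : nat.
   U_{-1} = 0, U_0 = 1,
   U_n = (1+q^n) x U_{n-1} + q^{n-1} s U_{n-2}  (n >= 1). *)
Fixpoint Ush (R : pzRingType) (x s q : R) (k : nat) : R :=
  match k with
  | 0 => 0
  | 1 => 1
  | (k'.+1 as k1).+1 =>
      (1 + q ^+ k1) * x * Ush x s q k1 + q ^+ k' * s * Ush x s q k'
  end.

Definition qint (R : pzRingType) (q : R) (m : nat) : R := \sum_(i < m) q ^+ i.
Definition qfact (R : pzRingType) (q : R) (m : nat) : R :=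
  \prod_(1 <= i < m.+1) qint q i.
Definition qbinom (R : fieldType) (q : R) (m j : nat) : R :=
  qfact q m / (qfact q j * qfact q (m - j)).

(* Main.v *)
Require Import Defs.
From mathcomp Require Import all_boot all_order all_algebra.
From mathcomp Require Import ring zify.
Import Order.TTheory GRing.Theory Num.Theory.
Local Open Scope ring_scope.

Section Aux.
Variable R : realFieldType.
Variables q s : R.
Hypothesis hq : q != -1.

Lemma qintS (a : nat) : qint q a.+1 = qint q a + q ^+ a.
Proof. by rewrite /qint big_ord_recr. Qed.

Lemma qintD (a b : nat) : qint q (a + b) = qint q a + q ^+ a * qint q b.
Proof.
elim: b => [|b IH]; first by rewrite addn0 /qint big_ord0 mulr0 addr0.
by rewrite addnS !qintS IH exprD; ring.
Qed.

Lemma qint_neq0 (i : nat) : (0 < i)%N -> qint q i != 0.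
Proof.
case: i => // i _.
have [q0|q0] := leP 0 q.
  rewrite /qint big_ord_recl expr0 gt_eqF // ltr_pwDl // sumr_ge0 // => j _.
  exact: exprn_ge0.
apply/negP => /eqP h.
have h1 : q ^+ i.+1 == 1 by rewrite expfS_eq1 -/(qint q i.+1) h eqxx orbT.
have h2 : `|q| ^+ i.+1 == 1 by rewrite -normrX (eqP h1) normr1.
rewrite pexpr_eq1 // ltr0_norm // in h2.
by move: hq; rewrite -(eqP h2) opprK eqxx.
Qed.

Lemma qfactS (a : nat) : qfact q a.+1 = qfact q a * qint q a.+1.
Proof. by rewrite /qfact big_nat_recr. Qed.

Lemma qfact0 : qfact q 0 = 1.
Proof. by rewrite /qfact big_geq. Qed.

Lemma qfact_neq0 (a : nat) : qfact q a != 0.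
Proof.
elim: a => [|a IH]; first by rewrite qfact0 oner_eq0.
by rewrite qfactS mulf_neq0 // qint_neq0.
Qed.

Lemma qbinom_nn n : qbinom q n n = 1.
Proof. by rewrite /qbinom subnn qfact0 mulr1 divff // qfact_neq0. Qed.

Lemma qbinom_n0 n : qbinom q n 0 = 1.
Proof. by rewrite /qbinom subn0 qfact0 mul1r divff // qfact_neq0. Qed.

Lemma qbinom_int k b :
  qbinom q (k + b.+1).+1 k.+1 = qbinom q (k + b.+1) k.+1 + q ^+ b.+1 * qbinom q (k + b.+1) k
  /\ qbinom q (k + b.+1).+1 k.+1 = q ^+ k.+1 * qbinom q (k + b.+1) k.+1 + qbinom q (k + b.+1) k.
Proof.
rewrite /qbinom.
have -> : ((k + b.+1).+1 - k.+1 = b.+1)%N by lia.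
have -> : ((k + b.+1) - k.+1 = b)%N by lia.
have -> : ((k + b.+1) - k = b.+1)%N by lia.
rewrite !qfactS.
have e1 : qint q (k + b.+1).+1 = qint q b.+1 + q ^+ b.+1 * qint q k.+1.
  by rewrite (_ : ((k + b.+1).+1 = b.+1 + k.+1)%N) ?qintD //; lia.
have e2 : qint q (k + b.+1).+1 = qint q k.+1 + q ^+ k.+1 * qint q b.+1.
  by rewrite (_ : ((k + b.+1).+1 = k.+1 + b.+1)%N) ?qintD //; lia.
have f1 := qfact_neq0 k. have f2 := qfact_neq0 b.
have i1 : qint q k.+1 != 0 by apply: qint_neq0.
have i2 : qint q b.+1 != 0 by apply: qint_neq0.
split.
  rewrite e1; field. rewrite f1 f2 i1 i2; done.
rewrite e2; field. rewrite f1 f2 i1 i2; done.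
Qed.

Definition gb n k := if (k <= n)%N then qbinom q n k else 0.

Lemma gb_big n k : (n < k)%N -> gb n k = 0.
Proof. by move=> h; rewrite /gb leqNgt h. Qed.

Lemma gbP1 n k : gb n.+1 k.+1 = gb n k.+1 + q ^+ (n - k) * gb n k.
Proof.
rewrite /gb ltnS.
have [lt|eq|gt] := ltngtP k n.
- idtac.
  rewrite /=.
  have [b ->] : exists b, n = (k + b.+1)%N by exists (n - k).-1; lia.
  have -> : ((k + b.+1) - k = b.+1)%N by lia.
  by case: (qbinom_int k b).
- by rewrite mulr0 addr0.
- by rewrite -gt subnn !qbinom_nn add0r mul1r.
Qed.

Lemma gbP2 n k : gb n.+1 k.+1 = q ^+ k.+1 * gb n k.+1 + gb n k.
Proof.
rewrite /gb ltnS.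
have [lt|eq|gt] := ltngtP k n.
- rewrite /=.
  have [b ->] : exists b, n = (k + b.+1)%N by exists (n - k).-1; lia.
  by case: (qbinom_int k b).
- by rewrite mulr0 addr0.
- by rewrite -gt !qbinom_nn mulr0 add0r.
Qed.

Definition c k : R := (-1) ^+ k * q ^+ 'C(k, 2).

Lemma cS k : c k.+1 = - q ^+ k * c k.
Proof. by rewrite /c binS bin1 exprS exprD; ring. Qed.

Lemma gbA n k : c k.+1 * gb n.+1 k.+1 = c k.+1 * gb n k.+1 + (- q ^+ n) * (c k * gb n k).
Proof.
rewrite gbP1 cS.
have [le|gt] := leqP k n.
  have -> : q ^+ n = q ^+ k * q ^+ (n - k) by rewrite -exprD subnKC.
  ring.
have h2 : (n < k.+1)%N by lia.
rewrite (gb_big _ _ gt) (gb_big _ _ h2); ring.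
Qed.

Lemma gbC n k : c k.+1 * gb n.+1 k.+1 = c k.+1 * q ^+ k.+1 * gb n k.+1 + (- q ^+ k) * (c k * gb n k).
Proof. by rewrite gbP2 cS; ring. Qed.

Definition P N k := \prod_(N + 1 - k <= j < N + 1) (1 + q ^+ j).

Lemma P0 N : P N 0 = 1.
Proof. by rewrite /P subn0 big_geq. Qed.

Lemma PS N k : (k < N)%N -> P N k.+1 = P N k * (1 + q ^+ (N - k)).
Proof.
move=> lt; rewrite /P (big_ltn (m := (N + 1 - k.+1)%N)); last by lia.
have -> : (N + 1 - k.+1).+1 = (N + 1 - k)%N by lia.
have -> : (N + 1 - k.+1 = N - k)%N by lia.
by rewrite mulrC.
Qed.

Lemma PS' N k : (k <= N)%N -> P N.+1 k.+1 = P N k * (1 + q ^+ N.+1).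
Proof.
move=> le; rewrite /P !addn1 big_nat_recr /=; last by lia.
by have -> : (N.+2 - k.+1 = N.+1 - k)%N by lia.
Qed.

Notation u := (Ush 1 s q).

Lemma uSS k : u k.+2 = (1 + q ^+ k.+1) * u k.+1 + q ^+ k * s * u k.
Proof. by rewrite /= mulr1. Qed.

Definition F n m := \sum_(0 <= k < n.+1) c k * gb n k * P (n + m) k * u (2 * n + m - k).

Lemma pascal_sum (h x y z : nat -> R) n :
  (forall k, x k.+1 = y k.+1 + z k) -> x 0%N = y 0%N -> y n.+1 = 0 ->
  \sum_(0 <= k < n.+2) x k * h k =
  \sum_(0 <= k < n.+1) y k * h k + \sum_(0 <= k < n.+1) z k * h k.+1.
Proof.
move=> hx h0 hn.
rewrite big_nat_recl // h0.
under eq_big_nat => k _ do rewrite hx mulrDl.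
rewrite big_split /= [in RHS]big_nat_recl // -!addrA; congr (_ + _).
by rewrite big_nat_recr //= hn mul0r addr0.
Qed.

Lemma stepC n m :
  \sum_(0 <= k < n.+2) c k * gb n.+1 k * P (n.+2 + m) k * (q ^+ (2 * n + m + 2 - k) * u (2 * n + m + 2 - k))
  = q ^+ (2 * n + m + 2) * F n m.+2 - q ^+ (2 * n + m + 1) * (1 + q ^+ (n + m + 2)) * F n m.+1.
Proof.
pose h k := P (n.+2 + m) k * (q ^+ (2 * n + m + 2 - k) * u (2 * n + m + 2 - k)).
transitivity (\sum_(0 <= k < n.+2) (c k * gb n.+1 k) * h k).
  by apply: eq_big_nat => k _; rewrite /h !mulrA.
rewrite (@pascal_sum _ _ (fun k => c k * q ^+ k * gb n k) (fun k => - q ^+ k * (c k * gb n k))).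
- rewrite /F !mulr_sumr -sumrN.
  congr (_ + _).
    apply: eq_big_nat => k /andP [_ hk]; rewrite /h.
    have -> : (n.+2 + m = n + m.+2)%N by lia.
    have -> : (2 * n + m + 2 - k = 2 * n + m.+2 - k)%N by lia.
    have -> : q ^+ (2 * n + m + 2) = q ^+ k * q ^+ (2 * n + m.+2 - k) by rewrite -exprD; congr (_ ^+ _); lia.
    ring.
  apply: eq_big_nat => k /andP [_ hk]; rewrite /h.
  rewrite (_ : (n.+2 + m = (n + m.+1).+1)%N); last by lia.
  rewrite PS'; last by lia.
  have -> : (2 * n + m + 2 - k.+1 = 2 * n + m.+1 - k)%N by lia.
  have -> : q ^+ (2 * n + m + 1) = q ^+ k * q ^+ (2 * n + m.+1 - k) by rewrite -exprD; congr (_ ^+ _); lia.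
  have -> : (n + m + 2 = (n + m.+1).+1)%N by lia.
  ring.
- by move=> k; rewrite gbC.
- by rewrite /gb /= !qbinom_n0 /c; ring.
- by rewrite (gb_big n n.+1 (ltnSn n)) mulr0.
Qed.

Lemma stepR n m :
  F n.+2 m = (1 - q ^+ n.+1) * F n.+1 m.+1 + s * (q ^+ (2 * n + m + 2) * F n m.+2
     - q ^+ (2 * n + m + 1) * (1 + q ^+ (n + m + 2)) * F n m.+1).
Proof.
rewrite -stepC.
pose h k := P (n.+2 + m) k * u (2 * n.+2 + m - k).
transitivity (\sum_(0 <= k < n.+3) (c k * gb n.+2 k) * h k).
  by apply: eq_big_nat => k _; rewrite /h !mulrA.
rewrite (@pascal_sum _ _ (fun k => c k * gb n.+1 k) (fun k => - q ^+ n.+1 * (c k * gb n.+1 k))).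
- rewrite /F mulr_sumr mulr_sumr -big_split -big_split /=.
  have -> : (n.+1 + m.+1 = n.+2 + m)%N by lia.
  apply: eq_big_nat => k /andP [_ hk]; rewrite /h.
  rewrite PS; last by lia.
  have -> : (2 * n.+2 + m - k = (2 * n + m + 2 - k).+2)%N by lia.
  have -> : (2 * n.+2 + m - k.+1 = (2 * n + m + 2 - k).+1)%N by lia.
  have -> : (2 * n.+1 + m.+1 - k = (2 * n + m + 2 - k).+1)%N by lia.
  rewrite uSS.
  have -> : q ^+ (2 * n + m + 2 - k).+1 = q ^+ n.+1 * q ^+ (n.+2 + m - k) by rewrite -exprD; congr (_ ^+ _); lia.
  ring.
- by move=> k; rewrite gbA.
- by rewrite /gb /= !qbinom_n0.
- by rewrite (gb_big n.+1 n.+2 (ltnSn _)) mulr0.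
Qed.

Lemma F0 m : F 0 m = u m.
Proof. rewrite /F big_nat1 /gb /= qbinom_n0 P0 /c /= muln0 add0n subn0 expr0 bin0n; ring. Qed.

Lemma F1 m : F 1 m = q ^+ m * s * u m.
Proof.
have g0 : gb 1 0 = 1 by rewrite /gb /= qbinom_n0.
have g1 : gb 1 1 = 1 by rewrite /gb /= qbinom_nn.
have c0 : c 0 = 1 by rewrite /c expr0 bin0n expr0 mulr1.
have c1 : c 1 = -1 by rewrite /c expr1 bin_small // expr0 mulr1.
rewrite /F big_nat_recr // big_nat1 g0 g1 c0 c1 P0 PS; last by lia.
rewrite P0 (_ : (2 * 1 + m - 0 = m.+2)%N); last by lia.
rewrite (_ : (2 * 1 + m - 1 = m.+1)%N); last by lia.
rewrite (_ : (1 + m - 0 = m.+1)%N); last by lia.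
rewrite uSS; set U1 := u m.+1; set U0 := u m; rewrite /=; ring.
Qed.

Lemma Fclosed n m : F n m = q ^+ (n * (n + m).-1) * s ^+ n * u m.
Proof.
elim/ltn_ind: n m => n IH m.
case: n IH => [|[|n]] IH.
- by rewrite F0 mul0n expr0 mul1r mul1r.
- by rewrite F1 mul1n add1n /= expr1.
rewrite stepR !IH //.
rewrite (_ : (n.+2 * (n.+2 + m).-1 = n * (n + m) + n + (n + m + 1) + (n + m + 1))%N); last by nia.
rewrite (_ : (n.+1 * (n.+1 + m.+1).-1 = n * (n + m) + n + (n + m + 1))%N); last by nia.
rewrite (_ : (n * (n + m.+2).-1 = n * (n + m) + n)%N); last by nia.
rewrite (_ : (n * (n + m.+1).-1 = n * (n + m))%N); last by nia.
rewrite (_ : (2 * n + m + 2 = n + (n + m + 1) + 1)%N); last by lia.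
rewrite (_ : (2 * n + m + 1 = n + (n + m + 1))%N); last by lia.
rewrite (_ : (n + m + 2 = (n + m + 1) + 1)%N); last by lia.
rewrite uSS.
rewrite !exprD !exprS.
ring.
Qed.

End Aux.

Theorem theorem3p4 (R : realFieldType) (q s : R) (n m : nat) (hq : q != -1) :
  \sum_(0 <= k < n.+1)
     (-1) ^+ k * q ^+ 'C(k, 2) * qbinom q n k
     * (\prod_(n + m + 1 - k <= j < n + m + 1) (1 + q ^+ j))
     * Ush 1 s q (2 * n + m - k)
  = q ^+ (n * n - n + m * n) * s ^+ n * Ush 1 s q m.
Proof.
have -> : (n * n - n + m * n = n * (n + m).-1)%N.
  case: n => [|n]; first by rewrite !muln0.
  rewrite addSn /= mulnS mulnDr; lia.
rewrite -(@Fclosed R q s hq n m) /F.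
apply: eq_big_nat => k /andP [_ hk].
by rewrite /gb /c -ltnS hk.
Qed.
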